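(* Let $d>k\geq1$, $\varepsilon\in(0,1)$, $A\succeq0$ symmetric with $\lambda_k>\lambda_{k+1}$, $\beta>0$ with $\lambda_k>2\sqrt\beta\geq\lambda_{k+1}$, $X_0\in\mathrm{St}(d,k)$ with $\cos\theta_k(U_k,X_0)>0$, and ANPM perturbations satisfying for all $t\geq0$: $\|U_{-k}^\top\Xi_t\|_2\leq c(\lambda_k-2\sqrt\beta)\varepsilon$ and $\|U_k^\top\Xi_t\|_2\leq c(\lambda_k-2\sqrt\beta)\cos\theta_k(U_k,X_t)$, $c=1/32$. Then for all $t\geq0$, $$\|G_t\|_2\leq\frac{r_+^t+\kappa r_-^t}{r_+^{t+1}+\kappa r_-^{t+1}},$$ where $r_\pm:=\frac{(1-c\Delta)\pm\sqrt{(1-c\Delta)^2-4\beta/\lambda_k^2}}{2}$ and $\kappa:=1+\frac{2c\Delta}{\sqrt{(1-c\Delta)^2-4\beta/\lambda_k^2}-c\Delta}$. Furthermore $\kappa\leq16/15$.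
   Context: $A$ has eigenvalues $\lambda_1\geq\dots\geq\lambda_d\geq0$, orthonormal eigenvectors $u_i$; $U_k:=[u_1..u_k]$, $U_{-k}:=[u_{k+1}..u_d]$, $\Lambda_k:=\mathrm{diag}(\lambda_1..\lambda_k)$. $\Delta:=(\lambda_k-2\sqrt\beta)/\lambda_k$. QR: $Y=XR$, $X^\top X=I_k$, $R$ upper triangular, nonnegative diagonal; $\theta_k(U,X):=\arccos\sigma_{\min}(U^\top X)$. ANPM: $(X_1,R_1)=\mathrm{QR}(\tfrac12AX_0+\Xi_0)$; for $t\geq1$, $Y_{t+1}=AX_t-\beta X_{t-1}R_t^{-1}+\Xi_t$, $(X_{t+1},R_{t+1})=\mathrm{QR}(Y_{t+1})$. $E_t:=\Lambda_k^{-1}(U_k^\top\Xi_t)(U_k^\top X_t)^{-1}$; $G_0:=(I_k/2+E_0)^{-1}$, $G_{t+1}:=(I_k-\beta\Lambda_k^{-1}G_t\Lambda_k^{-1}+E_{t+1})^{-1}$. *)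

(* Defs.v *)
From HB Require Import structures.
From mathcomp Require Import all_boot all_order all_algebra.
From mathcomp Require Import classical_sets reals trigo.
Set Implicit Arguments. Unset Strict Implicit. Unset Printing Implicit Defensive.
Import Order.TTheory GRing.Theory Num.Theory.
Local Open Scope ring_scope.
Local Open Scope classical_set_scope.

Definition vnorm {R : realType} {q : nat} (v : 'cV[R]_q) : R :=
  Num.sqrt (\sum_(i < q) (v i 0) ^+ 2).

Definition opnorm {R : realType} {p q : nat} (M : 'M[R]_(p, q)) : R :=
  sup [set vnorm (M *m v) | v in [set v : 'cV[R]_q | vnorm v <= 1]].

Definition smin {R : realType} {p q : nat} (M : 'M[R]_(p, q)) : R :=
  inf [set vnorm (M *m v) | v in [set v : 'cV[R]_q | vnorm v = 1]].

Definition theta_k {R : realType} {d k : nat} (U X : 'M[R]_(d, k)) : R :=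
  acos (smin (U^T *m X)).

Definition isQR {R : realType} {d k : nat} (Y X : 'M[R]_(d, k)) (Rm : 'M[R]_k) : Prop :=
  [/\ Y = X *m Rm, X^T *m X = 1%:M,
      (forall i j : 'I_k, (j < i)%N -> Rm i j = 0) &
      (forall i : 'I_k, 0 <= Rm i i)].

Definition Emat {R : realType} {d k : nat} (Lam : 'M[R]_k) (Uk Xi X : 'M[R]_(d, k))
  : 'M[R]_k := invmx Lam *m (Uk^T *m Xi) *m invmx (Uk^T *m X).

Fixpoint Gmat {R : realType} {d k : nat} (beta : R) (Lam : 'M[R]_k) (Uk : 'M[R]_(d, k))
  (Xi X : nat -> 'M[R]_(d, k)) (t : nat) : 'M[R]_k :=
  match t with
  | 0 => invmx (2^-1 *: 1%:M + Emat Lam Uk (Xi 0) (X 0))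
  | t'.+1 => invmx (1%:M - beta *: (invmx Lam *m Gmat beta Lam Uk Xi X t' *m invmx Lam)
                    + Emat Lam Uk (Xi t) (X t))
  end.

(* Main.v *)
Require Import Defs.
From HB Require Import structures.
From mathcomp Require Import all_boot all_order all_algebra.
From mathcomp Require Import classical_sets reals trigo.
From mathcomp Require Import ring lra.
Set Implicit Arguments. Unset Strict Implicit. Unset Printing Implicit Defensive.
Import Order.TTheory GRing.Theory Num.Theory.
Local Open Scope ring_scope.

Section VN.
Variable R : realType.

Lemma vnorm_ge0 q (v : 'cV[R]_q) : 0 <= vnorm v.
Proof. exact: sqrtr_ge0. Qed.

Lemma sumsq_ge0 q (v : 'cV[R]_q) : 0 <= \sum_(i < q) (v i 0) ^+ 2.
Proof. by apply: sumr_ge0 => i _; rewrite sqr_ge0. Qed.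

Lemma vnorm_sq q (v : 'cV[R]_q) : vnorm v ^+ 2 = \sum_(i < q) (v i 0) ^+ 2.
Proof. by rewrite /vnorm sqr_sqrtr // sumsq_ge0. Qed.

Lemma le_vnorm q (u v : 'cV[R]_q) : vnorm u ^+ 2 <= vnorm v ^+ 2 -> vnorm u <= vnorm v.
Proof. by move=> h; rewrite -(ler_pXn2r (isT : (0 < 2)%N)) ?nnegrE ?vnorm_ge0. Qed.

Lemma vnormZ q a (v : 'cV[R]_q) : vnorm (a *: v) = `|a| * vnorm v.
Proof.
apply/eqP; rewrite -(eqrXn2 (isT : (0 < 2)%N)) ?mulr_ge0 ?vnorm_ge0 ?normr_ge0 //.
rewrite exprMn !vnorm_sq mulr_sumr; apply/eqP/eq_bigr => i _.
by rewrite mxE exprMn real_normK ?num_real.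
Qed.

Lemma vnorm0 q : vnorm (0 : 'cV[R]_q) = 0.
Proof. by rewrite -(scale0r (0 : 'cV[R]_q)) vnormZ normr0 mul0r. Qed.

Lemma vnormN q (v : 'cV[R]_q) : vnorm (- v) = vnorm v.
Proof. by rewrite -scaleN1r vnormZ normrN normr1 mul1r. Qed.

Lemma vnorm_eq0 q (v : 'cV[R]_q) : vnorm v = 0 -> v = 0.
Proof.
move=> h; have : vnorm v ^+ 2 = 0 by rewrite h expr0n.
rewrite vnorm_sq => /eqP; rewrite psumr_eq0; last by move=> i _; rewrite sqr_ge0.
move/allP => H; apply/matrixP => i j; rewrite (ord1 j) mxE.
by have /implyP := H i (mem_index_enum _) => /(_ isT); rewrite sqrf_eq0 => /eqP.
Qed.

Lemma dot_le q (u v : 'cV[R]_q) :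
  \sum_(i < q) u i 0 * v i 0 <= vnorm u * vnorm v.
Proof.
have [hu|hu] := eqVneq (vnorm u) 0.
  by rewrite (vnorm_eq0 hu) big1 ?vnorm0 ?mul0r // => i _; rewrite mxE mul0r.
have [hv|hv] := eqVneq (vnorm v) 0.
  by rewrite (vnorm_eq0 hv) big1 ?vnorm0 ?mulr0 // => i _; rewrite mxE mulr0.
set a := vnorm u; set b := vnorm v.
have a0 : 0 < a by rewrite lt0r hu vnorm_ge0.
have b0 : 0 < b by rewrite lt0r hv vnorm_ge0.
have H : 2 * a * b * (\sum_(i < q) u i 0 * v i 0) <=
   b ^+ 2 * (\sum_(i < q) u i 0 ^+ 2) + a ^+ 2 * (\sum_(i < q) v i 0 ^+ 2).
  rewrite !mulr_sumr -big_split /=; apply: ler_sum => i _.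
  have := sqr_ge0 (b * u i 0 - a * v i 0); nra.
rewrite -!vnorm_sq -/a -/b in H.
have ab0 : 0 < a * b by rewrite mulr_gt0.
nra.
Qed.

Lemma vnormD q (u v : 'cV[R]_q) : vnorm (u + v) <= vnorm u + vnorm v.
Proof.
rewrite -(ler_pXn2r (isT : (0 < 2)%N)) ?nnegrE ?vnorm_ge0 ?addr_ge0 //.
have E : vnorm (u + v) ^+ 2 = vnorm u ^+ 2 + 2 * (\sum_(i < q) u i 0 * v i 0) + vnorm v ^+ 2.
  rewrite !vnorm_sq mulr_sumr -!big_split /=; apply: eq_bigr => i _.
  by rewrite mxE; ring.
rewrite E; have := dot_le u v; nra.
all: exact: vnorm_ge0.
Qed.

Lemma coord_le q (v : 'cV[R]_q) i : `|v i 0| <= vnorm v.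
Proof.
rewrite -(ler_pXn2r (isT : (0 < 2)%N)) ?nnegrE ?vnorm_ge0 ?normr_ge0 //.
rewrite real_normK ?num_real // vnorm_sq (bigD1 i) //= lerDl.
by apply: sumr_ge0 => j _; rewrite sqr_ge0.
Qed.

Lemma vnorm_l1 q (y : 'cV[R]_q) : vnorm y <= \sum_(i < q) `|y i 0|.
Proof.
rewrite -(ler_pXn2r (isT : (0 < 2)%N)) ?nnegrE ?vnorm_ge0 ?sumr_ge0 //.
rewrite vnorm_sq expr2 mulr_sumr; apply: ler_sum => i _.
rewrite -real_normK ?num_real // expr2 ler_wpM2r ?normr_ge0 //.
by rewrite (bigD1 i) //= lerDl sumr_ge0.
Qed.

Lemma Mv_bound p q (M : 'M[R]_(p, q)) (v : 'cV[R]_q) : vnorm v <= 1 ->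
  vnorm (M *m v) <= \sum_(i < p) \sum_(j < q) `|M i j|.
Proof.
move=> hv; apply: le_trans (vnorm_l1 _) _; apply: ler_sum => i _.
rewrite mxE; apply: le_trans (ler_norm_sum _ _ _) _; apply: ler_sum => j _.
rewrite normrM ler_piMr ?normr_ge0 //; exact: le_trans (coord_le _ _) hv.
Qed.

Lemma opnorm_ub p q (M : 'M[R]_(p, q)) (v : 'cV[R]_q) : vnorm v <= 1 ->
  vnorm (M *m v) <= opnorm M.
Proof.
move=> hv; apply: sup_upper_bound; last by exists v.
split; first by exists (vnorm (M *m v)), v.
exists (\sum_(i < p) \sum_(j < q) `|M i j|) => _ [w hw <-]; exact: Mv_bound.
Qed.

Lemma opnorm_le p q (M : 'M[R]_(p, q)) C :
  (forall v : 'cV[R]_q, vnorm v <= 1 -> vnorm (M *m v) <= C) -> opnorm M <= C.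
Proof.
move=> H; apply: ge_sup.
  by exists (vnorm (M *m 0)), 0 => //=; rewrite vnorm0.
by move=> _ [w hw <-]; exact: H.
Qed.

Lemma opnorm_ge0 p q (M : 'M[R]_(p, q)) : 0 <= opnorm M.
Proof. have := @opnorm_ub p q M 0; rewrite mulmx0 !vnorm0 => h; apply: h; exact: ler01. Qed.

Lemma normalize q (v : 'cV[R]_q) : v != 0 -> vnorm ((vnorm v)^-1 *: v) = 1.
Proof.
move=> hv; have h0 : vnorm v != 0 by apply: contra hv => /eqP /vnorm_eq0 ->.
rewrite vnormZ ger0_norm ?invr_ge0 ?vnorm_ge0 // mulVf //.
Qed.

Lemma opnorm_mul p q (M : 'M[R]_(p, q)) (v : 'cV[R]_q) :
  vnorm (M *m v) <= opnorm M * vnorm v.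
Proof.
have [->|hv] := eqVneq v 0; first by rewrite mulmx0 !vnorm0 mulr0.
have h0 : 0 < vnorm v by rewrite lt0r vnorm_ge0 andbT; apply: contra hv => /eqP /vnorm_eq0 ->.
have := opnorm_ub M (v := (vnorm v)^-1 *: v); rewrite normalize // => /(_ (lexx _)).
rewrite -scalemxAr vnormZ ger0_norm ?invr_ge0 ?vnorm_ge0 //.
by rewrite ler_pdivrMl // mulrC.
Qed.

Lemma opnorm_leP p q (M : 'M[R]_(p, q)) a :
  opnorm M <= a -> forall v, vnorm (M *m v) <= a * vnorm v.
Proof.
move=> h v; apply: le_trans (opnorm_mul M v) _; rewrite ler_wpM2r ?vnorm_ge0 //.
Qed.

Lemma smin_lb p q (M : 'M[R]_(p, q)) (v : 'cV[R]_q) : vnorm v = 1 ->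
  smin M <= vnorm (M *m v).
Proof.
move=> hv; apply: ge_inf; last by exists v.
exists 0 => _ [w hw <-]; exact: vnorm_ge0.
Qed.

Lemma smin_scaled p q (M : 'M[R]_(p, q)) (z : 'cV[R]_q) :
  smin M * vnorm z <= vnorm (M *m z).
Proof.
have [->|hz] := eqVneq z 0; first by rewrite mulmx0 !vnorm0 mulr0.
have h0 : 0 < vnorm z by rewrite lt0r vnorm_ge0 andbT; apply: contra hz => /eqP /vnorm_eq0 ->.
have := smin_lb M (normalize hz).
rewrite -scalemxAr vnormZ ger0_norm ?invr_ge0 ?vnorm_ge0 //.
move=> h; rewrite -ler_pdivlMr // mulrC; exact: h.
Qed.

Lemma lb_unit n (M : 'M[R]_n) a : 0 < a ->
  (forall z, a * vnorm z <= vnorm (M *m z)) -> M \in unitmx.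
Proof.
move=> a0 H; rewrite unitmxE unitfE; apply/eqP => hdet.
have /det0P [w w0 hw] : \det M^T == 0 by rewrite det_tr hdet.
have := H w^T; rewrite -(trmxK M) -trmx_mul hw trmx0 vnorm0.
have : 0 < vnorm w^T.
  rewrite lt0r vnorm_ge0 andbT; apply: contra w0 => /eqP /vnorm_eq0 /eqP.
  by rewrite -trmx0 (inj_eq trmx_inj).
move=> p1 p2; have := mulr_gt0 a0 p1; lra.
Qed.

Lemma smin_inv n (M : 'M[R]_n) (v : 'cV[R]_n) :
  smin M * vnorm (invmx M *m v) <= vnorm v.
Proof.
have [hu|hu] := boolP (M \in unitmx).
  by have := smin_scaled M (invmx M *m v); rewrite mulmxA mulmxV // mul1mx.
have hs : smin M <= 0.
  apply: contraNT hu; rewrite -ltNge => hs; apply: (lb_unit hs) => z.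
  exact: smin_scaled.
apply: le_trans (vnorm_ge0 v); rewrite mulr_le0_ge0 ?vnorm_ge0 //.
Qed.

Lemma neumann n (N : 'M[R]_n) (al a : R) : 0 <= a -> a < al ->
  (forall z, vnorm (N *m z) <= a * vnorm z) ->
  opnorm (invmx (al%:M + N)) <= (al - a)^-1.
Proof.
move=> a0 aal HN.
have key : forall z, (al - a) * vnorm z <= vnorm ((al%:M + N) *m z).
  move=> z; have e : al *: z = (al%:M + N) *m z + - (N *m z).
    by rewrite mulmxDl mul_scalar_mx addrK.
  have := vnormD ((al%:M + N) *m z) (- (N *m z)); rewrite -e vnormN vnormZ.
  rewrite ger0_norm; last lra.
  have := HN z; lra.
have al0 : 0 < al - a by lra.
have hu := lb_unit al0 key.
apply: opnorm_le => v hv; set z := invmx _ *m v.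
have := key z; rewrite /z mulmxA mulmxV // mul1mx => h.
rewrite -(ler_pM2l al0) mulfV ?gt_eqF //; exact: le_trans h hv.
Qed.

Lemma diag_lb n (d : 'rV[R]_n) (L : R) : 0 <= L -> (forall i, L <= d 0 i) ->
  forall z, L * vnorm z <= vnorm (diag_mx d *m z).
Proof.
move=> L0 Hd z.
rewrite -(ler_pXn2r (isT : (0 < 2)%N)) ?nnegrE ?vnorm_ge0 ?mulr_ge0 //.
rewrite exprMn !vnorm_sq mulr_sumr; apply: ler_sum => i _.
rewrite mul_diag_mx mxE exprMn ler_wpM2r ?sqr_ge0 //.
  have := Hd i; nra.
exact: vnorm_ge0.
Qed.

Lemma diag_inv n (d : 'rV[R]_n) (L : R) : 0 < L -> (forall i, L <= d 0 i) ->
  forall y, vnorm (invmx (diag_mx d) *m y) <= L^-1 * vnorm y.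
Proof.
move=> L0 Hd y; have H := diag_lb (ltW L0) Hd.
have hu := lb_unit L0 H.
have := H (invmx (diag_mx d) *m y); rewrite mulmxA mulmxV // mul1mx => h.
by rewrite -(ler_pM2l L0) mulrA mulfV ?gt_eqF // mul1r.
Qed.

Lemma vnorm_dot q (v : 'cV[R]_q) : vnorm v ^+ 2 = (v^T *m v) 0 0.
Proof. by rewrite vnorm_sq mxE; apply: eq_bigr => i _; rewrite mxE expr2. Qed.

Lemma vnorm_iso p q (X : 'M[R]_(p, q)) v : X^T *m X = 1%:M -> vnorm (X *m v) = vnorm v.
Proof.
move=> h; apply/eqP; rewrite -(eqrXn2 (isT : (0 < 2)%N)) ?vnorm_ge0 //.
by rewrite !vnorm_dot trmx_mul mulmxA -(mulmxA _ X^T) h mulmx1.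
Qed.

Lemma vnorm_usub p q (y : 'cV[R]_(p + q)) : vnorm (usubmx y) <= vnorm y.
Proof.
rewrite -(ler_pXn2r (isT : (0 < 2)%N)) ?nnegrE ?vnorm_ge0 //.
rewrite !vnorm_sq big_split_ord /=.
rewrite [X in X <= _](_ : _ = \sum_(i < p) y (lshift q i) 0 ^+ 2).
  by rewrite lerDl sumr_ge0 // => i _; rewrite sqr_ge0.
by apply: eq_bigr => i _; rewrite mxE.
Qed.

Lemma vnorm_proj p q (U : 'M[R]_(p + q)) (w : 'cV[R]_(p + q)) :
  U^T *m U = 1%:M -> vnorm ((lsubmx U)^T *m w) <= vnorm w.
Proof.
move=> h; rewrite trmx_lsub mul_usub_mx; apply: le_trans (vnorm_usub _) _.
rewrite vnorm_iso //; rewrite trmxK; exact: mulmx1C.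
Qed.

Lemma unit_vec q (hq : (0 < q)%N) : exists e : 'cV[R]_q, vnorm e = 1.
Proof.
exists (delta_mx (Ordinal hq) 0).
apply/eqP; rewrite -(eqrXn2 (isT : (0 < 2)%N)) ?vnorm_ge0 ?ler01 // expr1n.
rewrite vnorm_sq (bigD1 (Ordinal hq)) //= big1 ?addr0.
  by rewrite mxE !eqxx /= expr1n.
by move=> i hi; rewrite mxE (negbTE hi) /= expr0n.
Qed.

Lemma smin_ge0 p q (hq : (0 < q)%N) (M : 'M[R]_(p, q)) : 0 <= smin M.
Proof.
have [e he] := unit_vec hq.
apply: lb_le_inf; first by exists (vnorm (M *m e)), e.
move=> _ [w hw <-]; exact: vnorm_ge0.
Qed.

Lemma smin_le1 k m (hk : (0 < k)%N) (U : 'M[R]_(k + m)) (X : 'M[R]_(k + m, k)) :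
  U^T *m U = 1%:M -> X^T *m X = 1%:M -> smin ((lsubmx U)^T *m X) <= 1.
Proof.
move=> hU hX; have [e he] := unit_vec hk.
apply: le_trans (smin_lb _ he) _; rewrite -mulmxA.
by apply: le_trans (vnorm_proj _ hU) _; rewrite vnorm_iso // he.
Qed.

Lemma E_bound k m (hk : (0 < k)%N) (U : 'M[R]_(k + m)) (X Xi : 'M[R]_(k + m, k))
  (d : 'rV[R]_k) (L C : R) :
  0 < L -> (forall i, L <= d 0 i) -> 0 <= C -> U^T *m U = 1%:M -> X^T *m X = 1%:M ->
  opnorm ((lsubmx U)^T *m Xi) <= C * cos (theta_k (lsubmx U) X) ->
  opnorm (Emat (diag_mx d) (lsubmx U) Xi X) <= C / L.
Proof.
move=> L0 Hd C0 hU hX hP.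
set M := (lsubmx U)^T *m X.
have hs : cos (theta_k (lsubmx U) X) = smin M.
  rewrite /theta_k acosK // in_itv /=; apply/andP; split.
    by apply: le_trans (smin_ge0 hk _); rewrite lerN10.
  exact: smin_le1.
rewrite hs in hP.
apply: opnorm_le => v hv; rewrite /Emat -!mulmxA.
apply: le_trans (diag_inv L0 Hd _) _.
set z := invmx M *m v.
have h1 := opnorm_leP hP z.
have h2 : smin M * vnorm z <= 1 := le_trans (smin_inv M v) hv.
have s0 := smin_ge0 hk M.
have z0 := vnorm_ge0 z.
have Li : 0 < L^-1 by rewrite invr_gt0.
rewrite mulmxA mulrC ler_pM2r //; apply: le_trans h1 _.
rewrite -mulrA; rewrite -{2}(mulr1 C); exact: ler_wpM2l.
Qed.
End VN.

Lemma scalar (R : rcfType) (L beta q c Delta disc rp rm kappa : R) :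
  0 < q -> q ^+ 2 = beta -> 2 * q < L ->
  c = 32^-1 -> Delta = (L - 2 * q) / L ->
  disc = Num.sqrt ((1 - c * Delta) ^+ 2 - 4 * beta / L ^+ 2) ->
  rp = ((1 - c * Delta) + disc) / 2 ->
  rm = ((1 - c * Delta) - disc) / 2 ->
  kappa = 1 + 2 * c * Delta / (disc - c * Delta) ->
  forall h : nat -> R, (forall t, h t = (rp ^+ t + kappa * rm ^+ t) / (rp ^+ t.+1 + kappa * rm ^+ t.+1)) ->
  [/\ kappa <= 16 / 15, 0 <= c * Delta, c * Delta < 2^-1,
      (2^-1 - c * Delta)^-1 = h 0%N &
      forall t, [/\ 0 <= h t, beta / L ^+ 2 * h t + c * Delta < 1 &
                 (1 - (beta / L ^+ 2 * h t + c * Delta))^-1 = h t.+1]].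
Proof.
move=> q0 qq hL -> -> -> -> -> ->.
have L0 : 0 < L by lra.
set x := 2 * q / L.
have x0 : 0 < x by rewrite /x divr_gt0 // mulr_gt0.
have x1 : x < 1 by rewrite /x ltr_pdivrMr // mul1r.
have hD : (L - 2 * q) / L = 1 - x by rewrite /x; field; rewrite gt_eqF.
have hb : 4 * beta / L ^+ 2 = x ^+ 2 by rewrite /x -qq; field; rewrite gt_eqF.
have hb' : beta / L ^+ 2 = x ^+ 2 / 4 by rewrite /x -qq; field; rewrite gt_eqF.
rewrite hD hb hb'.
set u := 32^-1 * (1 - x).
have u0 : 0 <= u by rewrite /u mulr_ge0 ?invr_ge0; lra.
have u31 : 31 * u <= 31 / 32 by rewrite /u; lra.
set a := 1 - u.
set X := a ^+ 2 - x ^+ 2.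
have HX : (31 * u) ^+ 2 <= X.
  rewrite /X /a /u; nra.
have X0 : 0 <= X by apply: le_trans HX; rewrite sqr_ge0.
set D := Num.sqrt X.
have DD : D ^+ 2 = X by rewrite sqr_sqrtr.
have D0 : 0 <= D by rewrite sqrtr_ge0.
have HD : 31 * u <= D.
  by rewrite -(ler_pXn2r (isT : (0 < 2)%N)) ?nnegrE ?DD // mulr_ge0.
have a0 : 0 < a by rewrite /a; lra.
have Da : D < a.
  rewrite -(ltr_pXn2r (isT : (0 < 2)%N)) ?nnegrE ?DD ?(ltW a0) // /X.
  have : 0 < x ^+ 2 by rewrite exprn_gt0.
  lra.
have u0' : 0 < u by rewrite /u mulr_gt0 ?invr_gt0; lra.
have hk : 2 / 32 * (1 - x) = 2 * u by rewrite /u mulrA.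
rewrite hk.
have Du : 0 < D - u by lra.
set kap := 1 + 2 * u / (D - u).
have kap1 : 1 <= kap by rewrite /kap lerDl divr_ge0 // ?ltW //; lra.
have kapb : kap <= 16 / 15.
  have : 2 * u / (D - u) <= 15^-1 by rewrite ler_pdivrMr //; lra.
  rewrite /kap; lra.
set rP := (a + D) / 2; set rM := (a - D) / 2.
have rp0 : 0 < rP by rewrite /rP; lra.
have rm0 : 0 < rM by rewrite /rM; lra.
set b := x ^+ 2 / 4.
have rp2 : rP ^+ 2 = a * rP - b.
  rewrite /rP /b; move: DD; rewrite /X => DD'; nra.
have rm2 : rM ^+ 2 = a * rM - b.
  rewrite /rM /b; move: DD; rewrite /X => DD'; nra.
have erp t : rP ^+ t.+2 = a * rP ^+ t.+1 - b * rP ^+ t.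
  by rewrite !exprS mulrA -expr2 rp2; ring.
have erm t : rM ^+ t.+2 = a * rM ^+ t.+1 - b * rM ^+ t.
  by rewrite !exprS mulrA -expr2 rm2; ring.
pose s t := rP ^+ t + kap * rM ^+ t.
have s0 t : 0 < s t.
  rewrite /s; have h1 : 0 < rP ^+ t by rewrite exprn_gt0.
  have h2 : 0 <= kap * rM ^+ t by rewrite mulr_ge0 ?exprn_ge0 ?ltW //; lra.
  lra.
have srec t : s t.+2 = a * s t.+1 - b * s t by rewrite /s erp erm; ring.
move=> h hE0.
have hE t : h t = s t / s t.+1 by rewrite hE0.
have key t : 1 - (b * h t + u) = s t.+2 / s t.+1.
  rewrite hE srec /a; field; exact: lt0r_neq0 (s0 _).
split => //; first lra.
  have E : rP + kap * rM = (1 + kap) * (2^-1 - u).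
    rewrite /rP /rM /kap /a; field; exact: lt0r_neq0 Du.
  rewrite hE0 expr0 !expr1 mulr1 E invfM mulrA mulfV ?mul1r //.
  by apply: lt0r_neq0; lra.
move=> t; split.
- by rewrite hE divr_ge0 // ltW.
- have := key t; have : 0 < s t.+2 / s t.+1 by rewrite divr_gt0.
  lra.
- by rewrite key invf_div hE.
Qed.

(* d = k + m with k >= 1, m >= 1 (i.e. d > k >= 1); eigenvalues are lam 1, ..., lam d *)
Theorem lemma4 (R : realType) (k m : nat) (hk : (0 < k)%N) (hm : (0 < m)%N)
  (eps : R) (heps0 : 0 < eps) (heps1 : eps < 1)
  (A : 'M[R]_(k + m)) (lam : nat -> R) (U : 'M[R]_(k + m))
  (hAsym : A^T = A)
  (hUorth : U^T *m U = 1%:M)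
  (hAeig : A = U *m diag_mx (\row_(i < k + m) lam i.+1) *m U^T)
  (hlam_mono : forall i j : nat, (1 <= i)%N -> (i <= j)%N -> (j <= k + m)%N -> lam j <= lam i)
  (hlam_nneg : 0 <= lam (k + m)%N)
  (hgap : lam k > lam k.+1)
  (beta : R) (hbeta : 0 < beta)
  (hbk : lam k > 2 * Num.sqrt beta) (hbk1 : 2 * Num.sqrt beta >= lam k.+1)
  (X : nat -> 'M[R]_(k + m, k)) (Rm : nat -> 'M[R]_k) (Xi : nat -> 'M[R]_(k + m, k))
  (hX0 : (X 0)^T *m X 0 = 1%:M)
  (hcos0 : 0 < cos (theta_k (lsubmx U) (X 0)))
  (hQR1 : isQR (2^-1 *: (A *m X 0) + Xi 0) (X 1%N) (Rm 1%N))
  (hQR : forall t : nat,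
     isQR (A *m X t.+1 - beta *: (X t *m invmx (Rm t.+1)) + Xi t.+1) (X t.+2) (Rm t.+2))
  (hXi_perp : forall t : nat,
     opnorm ((rsubmx U)^T *m Xi t) <= 32^-1 * (lam k - 2 * Num.sqrt beta) * eps)
  (hXi_par : forall t : nat,
     opnorm ((lsubmx U)^T *m Xi t)
       <= 32^-1 * (lam k - 2 * Num.sqrt beta) * cos (theta_k (lsubmx U) (X t))) :
  let c : R := 32^-1 in
  let Delta : R := (lam k - 2 * Num.sqrt beta) / lam k in
  let disc : R := Num.sqrt ((1 - c * Delta) ^+ 2 - 4 * beta / lam k ^+ 2) in
  let rp : R := ((1 - c * Delta) + disc) / 2 in
  let rm : R := ((1 - c * Delta) - disc) / 2 in
  let kappa : R := 1 + 2 * c * Delta / (disc - c * Delta) in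
  let Lam : 'M[R]_k := diag_mx (\row_(i < k) lam i.+1) in
  (forall t : nat,
     opnorm (Gmat beta Lam (lsubmx U) Xi X t)
       <= (rp ^+ t + kappa * rm ^+ t) / (rp ^+ t.+1 + kappa * rm ^+ t.+1))
  /\ kappa <= 16 / 15.

Proof.
move=> c Delta disc rp rm kappa Lam.
have q0 : 0 < Num.sqrt beta by rewrite sqrtr_gt0.
have qq : Num.sqrt beta ^+ 2 = beta by rewrite sqr_sqrtr // ltW.
pose h := fun t : nat => (rp ^+ t + kappa * rm ^+ t) / (rp ^+ t.+1 + kappa * rm ^+ t.+1).
have [kb cD0 cD2 h0 hstep] := @scalar R (lam k) beta (Num.sqrt beta) c Delta disc rp rm kappa
  q0 qq hbk erefl erefl erefl erefl erefl erefl h (fun t => erefl).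
split => //.
have L0 : 0 < lam k by lra.
have hXX : forall t, (X t)^T *m X t = 1%:M.
  by case=> [|[|t]] //; [case: hQR1 | case: (hQR t)].
have hLd : forall i : 'I_k, lam k <= (\row_(i < k) lam i.+1) 0 i.
  by move=> i; rewrite mxE; apply: hlam_mono => //; exact: leq_addr.
have hE : forall t, opnorm (Emat Lam (lsubmx U) (Xi t) (X t)) <= c * Delta.
  move=> t; have C0 : 0 <= 32^-1 * (lam k - 2 * Num.sqrt beta).
    by rewrite mulr_ge0 ?invr_ge0 //; lra.
  have := E_bound hk L0 hLd C0 hUorth (hXX t) (hXi_par t).
  by rewrite /c /Delta mulrA.
suff H : forall t, opnorm (Gmat beta Lam (lsubmx U) Xi X t) <= h t by exact: H.
elim => [|t IH].
  rewrite /= scalemx1 -h0; apply: neumann => //; exact: opnorm_leP (hE 0%N).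
have [hg0 hlt heq] := hstep t.
rewrite [Gmat _ _ _ _ _ t.+1]/= -addrA (addrC (- _)) -heq.
apply: neumann.
- by rewrite addr_ge0 // mulr_ge0 // divr_ge0 ?exprn_ge0 ?ltW.
- exact: hlt.
move=> z; rewrite mulmxDl mulNmx -scalemxAl.
apply: le_trans (vnormD _ _) _; rewrite vnormN vnormZ (ger0_norm (ltW hbeta)).
have eE := opnorm_leP (hE t.+1) z.
have eK : vnorm (invmx Lam *m Gmat beta Lam (lsubmx U) Xi X t *m invmx Lam *m z)
    <= (lam k)^-1 * (h t * ((lam k)^-1 * vnorm z)).
  rewrite -!mulmxA; apply: le_trans (diag_inv L0 hLd _) _.
  rewrite ler_pM2l ?invr_gt0 //; apply: le_trans (opnorm_leP IH _) _.
  rewrite ler_wpM2l //; exact: diag_inv.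
have eq1 : beta / lam k ^+ 2 * h t * vnorm z =
    beta * ((lam k)^-1 * (h t * ((lam k)^-1 * vnorm z))).
  by field; rewrite gt_eqF.
have eK' := ler_wpM2l (ltW hbeta) eK.
rewrite mulrDl eq1 [X in _ <= X]addrC; exact: lerD eE eK'.
Qed.
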